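(* Let $R$ be a ring and let $\mathcal{S}$ be a sublattice of the lattice $\mathbb{I}(R)$ of two-sided ideals of $R$ which is closed under arbitrary intersections and contains $\{0\}$ and $R$. Suppose that for each $I\in\mathcal{S}$ we have $I=\ker(\{\mathfrak{p}\in\mathrm{Spec}_{\mathcal{S}}(R):\mathfrak{p}\supseteq I\})$. Let $\mathbb{O}(\mathrm{Spec}_{\mathcal{S}}(R))$ be the lattice of open subsets of $\mathrm{Spec}_{\mathcal{S}}(R)$ in the Jacobson topology, and define $\phi\colon \mathbb{O}(\mathrm{Spec}_{\mathcal{S}}(R))\to\mathcal{S}$ by $\phi(U)=\ker(U^c)$. Then $\phi$ is a lattice isomorphism.
   Context: An ideal $P\in\mathcal{S}$ is $\mathcal{S}$-prime if $P\neq R$ and for all $I,J\in\mathcal{S}$, $IJ\subseteq P$ implies $I\subseteq P$ or $J\subseteq P$; $\mathrm{Spec}_{\mathcal{S}}(R)$ is the set of $\mathcal{S}$-prime ideals. For $T\subseteq\mathrm{Spec}_{\mathcal{S}}(R)$, $\ker(T)=\bigcap_{\mathfrak{p}\in T}\mathfrak{p}$ (with $\ker(\emptyset)=R$), and $U^c$ denotes complement in $\mathrm{Spec}_{\mathcal{S}}(R)$. The Jacobson topology is the topology whose closure operation is $\overline{T}=\{\mathfrak{p}\in\mathrm{Spec}_{\mathcal{S}}(R):\mathfrak{p}\supseteq\ker(T)\}$. *)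

(* Defs.v *)
From mathcomp Require Import all_boot all_algebra.
From mathcomp Require Import boolp classical_sets.
Set Implicit Arguments. Unset Strict Implicit. Unset Printing Implicit Defensive.
Import GRing.Theory.
Local Open Scope ring_scope.
Local Open Scope classical_set_scope.

Section Ideals.
Variable R : pzRingType.

Definition is_ideal (I : set R) : Prop :=
  I 0 /\ (forall x y, I x -> I y -> I (x - y)) /\
  (forall r x, I x -> I (r * x)) /\ (forall r x, I x -> I (x * r)).

(* product of ideals: the ideal generated by all products a*b, a in I, b in J *)
Definition ideal_mul (I J : set R) : set R :=
  fun x => forall K, is_ideal K -> (forall a b, I a -> J b -> K (a * b)) -> K x.

Definition ideal_add (I J : set R) : set R :=
  fun x => exists a b, I a /\ J b /\ x = a + b.

(* intersection of a family of ideals, with the empty family giving R *)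
Definition bigcap_ideals (F : set (set R)) : set R :=
  fun x => forall I, F I -> I x.

Variable S : set (set R).

Definition S_prime (P : set R) : Prop :=
  S P /\ P <> setT /\
  (forall I J, S I -> S J -> ideal_mul I J `<=` P -> I `<=` P \/ J `<=` P).

Definition SpecS : set (set R) := S_prime.

Definition kerS (T : set (set R)) : set R := bigcap_ideals T.

Definition jclosure (T : set (set R)) : set (set R) :=
  fun p => SpecS p /\ kerS T `<=` p.

Definition jopen (U : set (set R)) : Prop :=
  U `<=` SpecS /\ jclosure (SpecS `\` U) = SpecS `\` U.

Definition phi (U : set (set R)) : set R := kerS (SpecS `\` U).

End Ideals.

(* Main.v *)
Require Import Defs.
From mathcomp Require Import all_boot all_algebra.
From mathcomp Require Import boolp classical_sets.
Local Open Scope ring_scope.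
Local Open Scope classical_set_scope.
Import GRing.Theory.

Lemma closedE (R : pzRingType) (S : set (set R)) U :
  jopen S U -> SpecS S `\` U = (fun p => SpecS S p /\ phi S U `<=` p).
Proof. by move=> [_ H]; exact: esym H. Qed.

Lemma add_sub (R : pzRingType) (I J p : set R) :
  is_ideal I -> is_ideal J -> is_ideal p ->
  (ideal_add I J `<=` p <-> I `<=` p /\ J `<=` p).
Proof.
move=> [I0 _] [J0 _] [p0 [pB _]]; split.
  move=> H; split => x Hx; apply: H.
    by exists x, 0; rewrite addr0.
  by exists 0, x; rewrite add0r.
move=> [HI HJ] x [a [b [Ia [Jb ->]]]].
have := pB a (0 - b) (HI _ Ia) (pB 0 b p0 (HJ _ Jb)).
by rewrite sub0r opprK.
Qed.

Theorem theorem3p4 (R : pzRingType) (S : set (set R))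
  (S_ideals : forall I, S I -> is_ideal I)
  (S_meet : forall I J, S I -> S J -> S (I `&` J))
  (S_join : forall I J, S I -> S J -> S (ideal_add I J))
  (S_bigcap : forall F : set (set R), F `<=` S -> S (bigcap_ideals F))
  (S_zero : S [set 0])
  (S_top : S setT)
  (S_semiprime : forall I, S I ->
     I = kerS (fun p => SpecS S p /\ I `<=` p)) :
  (* phi maps open sets into S *)
  (forall U, jopen S U -> S (phi S U)) /\
  (* phi is injective on open sets *)
  (forall U V, jopen S U -> jopen S V -> phi S U = phi S V -> U = V) /\
  (* phi is onto S *)
  (forall I, S I -> exists U, jopen S U /\ phi S U = I) /\
  (* phi preserves meets (U `&` V  |->  intersection) *)
  (forall U V, jopen S U -> jopen S V -> phi S (U `&` V) = phi S U `&` phi S V) /\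
  (* phi preserves joins (U `|` V  |->  ideal sum) *)
  (forall U V, jopen S U -> jopen S V ->
     phi S (U `|` V) = ideal_add (phi S U) (phi S V)).
Proof.
have P1 : forall U, jopen S U -> S (phi S U).
  by move=> U _; apply: S_bigcap => p [[Sp _] _].
split => //.
split.
  move=> U V oU oV E.
  have hC : SpecS S `\` U = SpecS S `\` V by rewrite (@closedE _ _ _ oU) (@closedE _ _ _ oV) E.
  apply: funext => p; apply: propext; split => H.
  - have [//|nV] := pselect (V p).
    have : (SpecS S `\` U) p by rewrite hC; split => //; exact: oU.1.
    by case.
  - have [//|nU] := pselect (U p).
    have : (SpecS S `\` V) p by rewrite -hC; split => //; exact: oV.1.
    by case.
split.
  move=> I SI.
  pose U := fun p => SpecS S p /\ ~ (I `<=` p).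
  have compE : SpecS S `\` U = (fun p => SpecS S p /\ I `<=` p).
    apply: funext => p; apply: propext; split.
      move=> [Sp nU]; split => //.
      have [//|nI] := pselect (I `<=` p).
      by exfalso; apply: nU.
    by move=> [Sp Ip]; split => // [[_]].
  exists U; split.
    split; first by move=> p [].
    by rewrite /jclosure compE -(S_semiprime I SI).
  by rewrite /phi compE -(S_semiprime I SI).
split.
  move=> U V _ _; apply: funext => x; apply: propext; split.
    move=> H; split => p [Sp nU]; apply: H; split => //; by case.
  move=> [H1 H2] p [Sp nUV].
  have [Up|nU] := pselect (U p); last by apply: H1.
  have [Vp|nV] := pselect (V p); last by apply: H2.
  by exfalso; apply: nUV.
move=> U V oU oV.
have SI := P1 U oU; have SJ := P1 V oV.
have E : SpecS S `\` (U `|` V) =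
   (fun p => SpecS S p /\ ideal_add (phi S U) (phi S V) `<=` p).
  apply: funext => p; apply: propext; split.
    move=> [Sp nUV].
    have hU : (SpecS S `\` U) p by split => // ?; apply: nUV; left.
    have hV : (SpecS S `\` V) p by split => // ?; apply: nUV; right.
    rewrite (@closedE _ _ _ oU) in hU; rewrite (@closedE _ _ _ oV) in hV.
    split => //; apply/add_sub; [exact: S_ideals _ SI|exact: S_ideals _ SJ|exact: S_ideals _ Sp.1|].
    by split; [exact: hU.2|exact: hV.2].
  move=> [Sp /add_sub H].
  have [HI HJ] := H (S_ideals _ SI) (S_ideals _ SJ) (S_ideals _ Sp.1).
  split => // -[Up|Vp].
    have : (SpecS S `\` U) p by rewrite (@closedE _ _ _ oU).
    by case.
  have : (SpecS S `\` V) p by rewrite (@closedE _ _ _ oV).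
  by case.
have -> : phi S (U `|` V) = kerS (SpecS S `\` (U `|` V)) by [].
rewrite E; exact: esym (S_semiprime _ (S_join _ _ SI SJ)).
Qed.
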